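(* Let $X$ be a Tychonoff space. The socle of $T''(X)$ consists exactly of those $f\in T''(X)$ for which $\{x\in X: f(x)\neq 0\}$ is finite.
   Context: $C(X)$ is the ring of real-valued continuous functions on $X$; a cozero set is a set $\{x: h(x)\neq 0\}$ with $h\in C(X)$. $T''(X)$ is the ring (under pointwise operations) of all functions $f\colon X\to\mathbb{R}$ for which there is a dense cozero set $U$ of $X$ with $f|_U$ continuous. The socle of a ring is the sum of its minimal ideals. *)

(* Defs.v *)
From HB Require Import structures.
From mathcomp Require Import all_boot all_order all_algebra.
From mathcomp Require Import all_classical all_reals all_analysis.
Set Implicit Arguments. Unset Strict Implicit. Unset Printing Implicit Defensive.
Import Order.TTheory GRing.Theory Num.Theory.
Import numFieldNormedType.Exports.
Local Open Scope classical_set_scope.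
Local Open Scope ring_scope.

Section TppDefs.
Variables (R : realType) (X : topologicalType).

(** Tychonoff = T1 + completely regular (points and closed sets are
    separated by continuous real-valued functions). *)
Definition tychonoff_space : Prop :=
  @accessible_space X /\
  (forall (a : X) (B : set X), closed B -> ~ B a ->
     exists h : X -> R, [/\ continuous h, h a = 0 & forall b, B b -> h b = 1]).

Definition coz (h : X -> R) : set X := [set x | h x != 0].

Definition cozero_set (U : set X) : Prop :=
  exists h : X -> R, continuous h /\ U = coz h.

Definition Tpp : set (X -> R) :=
  [set f | exists U : set X, [/\ cozero_set U, dense U & {within U, continuous f}]].

Definition Tpp_ideal (I : set (X -> R)) : Prop :=
  [/\ I `<=` Tpp,
      I (fun _ => 0),
      (forall f g, I f -> I g -> I (fun x => f x - g x)) &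
      (forall f g, I f -> Tpp g -> I (fun x => g x * f x))].

Definition Tpp_minimal_ideal (I : set (X -> R)) : Prop :=
  [/\ Tpp_ideal I,
      I <> [set (fun _ => 0)] &
      (forall J, Tpp_ideal J -> J `<=` I -> J = [set (fun _ => 0)] \/ J = I)].

(** socle = sum of all minimal ideals = finite sums of elements of
    minimal ideals (the empty sum gives 0) *)
Definition Tpp_socle : set (X -> R) :=
  [set f | exists (n : nat) (g : 'I_n -> X -> R),
     f = (fun x => \sum_(i < n) g i x) /\
     forall i, exists I, Tpp_minimal_ideal I /\ I (g i)].

End TppDefs.

(* Main.v *)
Require Import Defs.
From HB Require Import structures.
From mathcomp Require Import all_boot all_order all_algebra.
From mathcomp Require Import all_classical all_reals all_analysis.
Import Order.TTheory GRing.Theory Num.Theory.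
Import numFieldNormedType.Exports.
Local Open Scope classical_set_scope.
Local Open Scope ring_scope.

Lemma Tpp_cont (R : realType) (X : topologicalType) (f : X -> R) :
  continuous f -> @Tpp R X f.
Proof.
move=> cf; exists setT; split.
- exists (fun _ => 1); split; first exact: cst_continuous.
  by apply/seteqP; split => x //= _; rewrite /coz /= oner_neq0.
- by move=> O [x Ox] _; exists x.
- exact: continuous_subspaceT.
Qed.

Lemma coz_open {R : realType} {X : topologicalType} {h : X -> R} :
  continuous h -> open (coz h).
Proof.
move=> hc.
have -> : coz h = h @^-1` (~` [set 0]).
  by apply/seteqP; split => x /=; rewrite /coz /= => /eqP.
move/continuousP: hc; apply.
apply: closed_openC; exact/accessible_closed_set1/hausdorff_accessible/Rhausdorff.
Qed.

Lemma Tpp_op (R : realType) (X : topologicalType) (op : R -> R -> R)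
  (opc : forall (A : set X) (s t : subspace A -> R) x,
     {for x, continuous s} -> {for x, continuous t} ->
     {for x, continuous (fun y => op (s y) (t y))})
  (f g : X -> R) :
  @Tpp R X f -> @Tpp R X g -> @Tpp R X (fun x => op (f x) (g x)).
Proof.
move=> [U [[h1 [h1c ->]] dU cf]] [V [[h2 [h2c ->]] dV cg]].
exists (coz h1 `&` coz h2); split.
- exists (fun x => h1 x * h2 x); split.
    by move=> x; apply: continuousM; [apply: h1c | apply: h2c].
  by apply/seteqP; split => x; rewrite /coz /= mulf_eq0 negb_or => /andP.
- move=> O O0 Oo.
  have [x [Ox Ux]] := dU O O0 Oo.
  have O1 : (O `&` coz h1) !=set0 by exists x.
  have [y [[Oy U1y] V2y]] := dV _ O1 (openI Oo (coz_open h1c)).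
  by exists y.
- have cf' := continuous_subspaceW (@subIsetl _ (coz h1) (coz h2)) cf.
  have cg' := continuous_subspaceW (@subIsetr _ (coz h1) (coz h2)) cg.
  by move=> x; exact: (opc (coz h1 `&` coz h2) _ _ x (cf' x) (cg' x)).
Qed.

Lemma Tpp_mul (R : realType) (X : topologicalType) (f g : X -> R) :
  @Tpp R X f -> @Tpp R X g -> @Tpp R X (fun x => f x * g x).
Proof. by apply: Tpp_op => A s t x cs ct; apply: continuousM. Qed.

Lemma Tpp_add (R : realType) (X : topologicalType) (f g : X -> R) :
  @Tpp R X f -> @Tpp R X g -> @Tpp R X (fun x => f x + g x).
Proof. by apply: Tpp_op => A s t x cs ct; exact: (continuousD cs ct). Qed.

Lemma Tpp_sub (R : realType) (X : topologicalType) (f g : X -> R) :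
  @Tpp R X f -> @Tpp R X g -> @Tpp R X (fun x => f x - g x).
Proof. by apply: (@Tpp_op R X (fun a b => a - b)) => A s t x cs ct; exact: (continuousB cs ct). Qed.

Lemma socle0 (R : realType) (X : topologicalType) :
  @Tpp_socle R X (fun _ => 0).
Proof.
exists 0%N, (fun _ _ => 0); split; last by move=> [m]; rewrite ltn0.
by apply: funext => x; rewrite big_ord0.
Qed.

Lemma socle_add (R : realType) (X : topologicalType) (f g : X -> R) :
  @Tpp_socle R X f -> @Tpp_socle R X g -> @Tpp_socle R X (fun x => f x + g x).
Proof.
move=> [n [F [-> HF]]] [m [G [-> HG]]].
exists (n + m)%N, (fun i => match fintype.split i with inl j => F j | inr k => G k end).
split; last by move=> i; case: (fintype.split i) => [j|k]; [exact: HF | exact: HG].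
apply: funext => x; rewrite big_split_ord /=.
congr (_ + _); apply: eq_bigr => i _.
  by rewrite (unsplitK (inl i)).
by rewrite (unsplitK (inr i)).
Qed.

Lemma socle_single (R : realType) (X : topologicalType) (g : X -> R) (a : X) :
  @Tpp R X g -> (forall x, x <> a -> g x = 0) -> @Tpp_socle R X g.
Proof.
move=> Tg g0.
have [ga0|ga] := eqVneq (g a) 0.
  have -> : g = (fun _ => 0).
    apply: funext => x; have [->//|xa] := pselect (x = a); exact: g0.
  exact: socle0.
have Tc : forall c : R, @Tpp R X (fun _ => c) by move=> c; apply: Tpp_cont; exact: cst_continuous.
exists 1%N, (fun _ => g); split; first by apply: funext => x; rewrite big_ord1.
move=> _; exists [set u | exists c : R, u = fun x => c * g x]; split; last first.
  by exists 1; apply: funext => x; rewrite mul1r.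
split.
- split.
  + by move=> u [c ->]; apply: Tpp_mul => //; exact: Tc.
  + by exists 0; apply: funext => x; rewrite mul0r.
  + by move=> u v [c1 ->] [c2 ->]; exists (c1 - c2); apply: funext => x; rewrite mulrBl.
  + move=> u w [c ->] Tw; exists (w a * c); apply: funext => x.
    have [->|xa] := pselect (x = a); first by rewrite mulrA.
    by rewrite (g0 x xa) !mulr0.
- move=> eq.
  have : [set u | exists c : R, u = fun x => c * g x] g.
    by exists 1; apply: funext => x; rewrite mul1r.
  rewrite eq /= => /(congr1 (fun u => u a)) /= /eqP; by rewrite (negbTE ga).
- move=> J [Jsub J0 JB JM] JI.
  have [[u [Ju un0]]|none] := pselect (exists u, J u /\ u <> (fun _ => 0)).
    right; apply/seteqP; split; first exact: JI.
    move=> v [d ->].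
    have [c uc] := JI u Ju; subst u.
    have c0 : c != 0.
      by apply/eqP => c0; apply: un0; apply: funext => x; rewrite c0 mul0r.
    have := JM _ (fun _ => d / c) Ju (Tc _).
    congr J; apply: funext => x; by rewrite mulrA divfK.
  left; apply/seteqP; split; last by move=> v /= ->.
  move=> v Jv /=; have [//|vn] := pselect (v = fun _ => 0).
  by exfalso; apply: none; exists v.
Qed.

Lemma minimal_elem (R : realType) (X : topologicalType) (I : set (X -> R)) (g : X -> R) :
  @tychonoff_space R X -> @Tpp_minimal_ideal R X I -> I g ->
  @Tpp R X g /\ finite_set (@coz R X g).
Proof.
move=> [T1 sep] [[Isub I0 IB IM] Inz Imin] Ig.
split; first exact: Isub.
have sub1 : forall a b, @coz R X g a -> @coz R X g b -> a = b.
  move=> a b ga gb; have [//|nab] := pselect (a = b).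
  have cla : closed [set a] by exact: accessible_closed_set1.
  have nb : ~ [set a] b by move=> /= ba; apply: nab.
  have [h [hc hb ha]] := sep b [set a] cla nb.
  have ha1 : h a = 1 by apply: ha.
  have Th : @Tpp R X h by apply: Tpp_cont.
  have hg : I (fun x => h x * g x) := IM g h Ig Th.
  pose J := [set u | exists r, @Tpp R X r /\ u = fun x => r x * (h x * g x)].
  have JI : @Tpp_ideal R X J.
    split.
    - by move=> u [r [Tr ->]]; apply: Tpp_mul => //; exact: Isub.
    - exists (fun _ => 0); split; first by apply: Tpp_cont; exact: cst_continuous.
      by apply: funext => x; rewrite mul0r.
    - move=> u v [r1 [T1' ->]] [r2 [T2 ->]]; exists (fun x => r1 x - r2 x); split.
        exact: Tpp_sub.
      by apply: funext => x; rewrite mulrBl.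
    - move=> u w [r [Tr ->]] Tw; exists (fun x => w x * r x); split.
        exact: Tpp_mul.
      by apply: funext => x; rewrite mulrA.
  have JsI : J `<=` I by move=> u [r [Tr ->]]; exact: IM.
  case: (Imin J JI JsI) => [J0|JIeq].
    have : J (fun x => 1 * (h x * g x)).
      by exists (fun _ => 1); split => //; apply: Tpp_cont; exact: cst_continuous.
    rewrite J0 /= => /(congr1 (fun u => u a)) /=.
    rewrite ha1 !mul1r => /eqP; by rewrite (negbTE ga).
  have : J g by rewrite JIeq.
  move=> [r [_ /(congr1 (fun u => u b))]] /=.
  rewrite hb mul0r mulr0 => /eqP; by rewrite (negbTE gb).
have [[a ga]|none] := pselect (exists a, @coz R X g a).
  apply: sub_finite_set (finite_set1 a) => b gb; exact: (sub1 b a gb ga).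
apply: sub_finite_set (finite_set0 X) => b gb; apply: none; by exists b.
Qed.

Lemma supset_seq (R : realType) (X : topologicalType) :
  @tychonoff_space R X -> forall (s : seq X) (f : X -> R),
  @Tpp R X f -> @coz R X f `<=` [set` s] -> @Tpp_socle R X f.
Proof.
move=> [T1 sep]; elim=> [|a s IH] f Tf cs.
  have -> : f = (fun _ => 0).
    apply: funext => x; apply/eqP; apply: contrapT => fx.
    by have := cs x (introN idP fx).
  exact: socle0.
pose B := [set x | (x \in s) && (x != a)].
have clB : closed B.
  move: T1 => /accessible_finite_set_closed; apply.
  apply: sub_finite_set (finite_seq s) => x /= /andP[].
  by [].
have nB : ~ B a by rewrite /B /= eqxx andbF.
have [h [hc ha hB]] := sep a B clB nB.
have Th : @Tpp R X h by apply: Tpp_cont.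
pose f1 := fun x => f x * (1 - h x).
pose f2 := fun x => f x - f1 x.
have T1f : @Tpp R X f1.
  apply: Tpp_mul => //; apply: Tpp_cont => x.
  by apply: continuousB; [exact: cst_continuous | exact: hc].
have T2f : @Tpp R X f2 by apply: Tpp_sub.
have -> : f = (fun x => f1 x + f2 x).
  by apply: funext => x; rewrite /f2 addrC subrK.
apply: socle_add.
  apply: (@socle_single R X f1 a T1f) => x xa.
  rewrite /f1; have [fx0|fx] := eqVneq (f x) 0; first by rewrite fx0 mul0r.
  have := cs x fx; rewrite /= inE => /orP[/eqP //|xs].
  rewrite hB ?subrr ?mulr0 //; rewrite /B /= xs; exact/eqP.
apply: IH => //.
move=> x; rewrite /coz /f2 /f1 /= => nz.
have e : f x - f x * (1 - h x) = f x * h x by rewrite mulrBr mulr1 opprB addrC subrK.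
move: nz; rewrite e mulf_eq0 negb_or => /andP[fx hx].
have := cs x fx; rewrite /= inE => /orP[/eqP xa|//].
by move: hx; rewrite xa ha eqxx.
Qed.

Theorem theorem5p2 (R : realType) (X : topologicalType) :
  @tychonoff_space R X ->
  @Tpp_socle R X = [set f | @Tpp R X f /\ finite_set (@coz R X f)].
Proof.
move=> tX; apply/seteqP; split.
  move=> f [n [g [-> Hg]]] /=.
  rewrite -fct_sumE.
  apply: (big_ind (fun h => @Tpp R X h /\ finite_set (@coz R X h))).
  - split; first by apply: Tpp_cont; exact: cst_continuous.
    apply: sub_finite_set (finite_set0 X) => x /=; by rewrite /coz /= eqxx.
  - move=> h1 h2 [T1 F1] [T2 F2]; split; first exact (@Tpp_add R X h1 h2 T1 T2).
    apply: sub_finite_set (_ : finite_set (@coz R X h1 `|` @coz R X h2)).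
      move=> x; rewrite /coz /= => nz; have {}nz : h1 x + h2 x != 0 := nz.
      have [h10|h1n] := eqVneq (h1 x) 0; last by left.
      by right; move: nz; rewrite h10 add0r.
    by rewrite finite_setU.
  - by move=> i _; have [I [mI Ii]] := Hg i; exact: (@minimal_elem R X I (g i) tX mI Ii).
move=> f [Tf /finite_seqP [s cs]].
by apply: (@supset_seq R X tX s f Tf); rewrite cs.
Qed.
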